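(* Fix $0<p<1$ and let $\Delta\ge \frac{-\ln\left(1-\sqrt[n]{p}\right)}{\lambda}$. Then in the $\mathrm{EDD}(\lambda)$ model with a global clock, the probability that a run of the protocol $\mathrm{CORE}(\Delta)$ is correct is at least $p$.
   Context: Agents $i_0,i_1,\ldots,i_n$ share an accurate global clock and are connected by a complete reliable network; the delay of each message is an independent exponential random variable with parameter $\lambda$. At time $0$ the supervisor $i_0$ receives an external input. Protocol $\mathrm{CORE}(\Delta)$: at time $0$, $i_0$ sends a ''trigger'' message to each of $i_1,\ldots,i_n$; upon receiving the trigger, agent $i_k$ waits until the global time is at least $\Delta$ and then performs its action $\alpha_k$ (acting immediately if the trigger arrives after time $\Delta$). Letting $t_k$ be the time at which $i_k$ performs $\alpha_k$, a run is correct if $t_1\le t_2\le\cdots\le t_n<\infty$. *)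

(* Defs.v *)
From HB Require Import structures.
From mathcomp Require Import all_boot all_order all_algebra.
From mathcomp Require Import all_classical all_reals all_analysis.
Set Implicit Arguments. Unset Strict Implicit. Unset Printing Implicit Defensive.
Import Order.TTheory GRing.Theory Num.Theory.
Local Open Scope classical_set_scope.
Local Open Scope ring_scope.

Definition mutually_independent d (T : measurableType d) (R : realType)
    (P : probability T R) (n : nat) (X : 'I_n -> {RV P >-> R}) : Prop :=
  forall (S : {set 'I_n}) (B : 'I_n -> set R),
    (forall i, measurable (B i)) ->
    P (\bigcap_(i in [set` S]) (X i @^-1` B i)) =
      (\prod_(i in S) P (X i @^-1` B i))%E.

Definition exponentially_distributed d (T : measurableType d) (R : realType)
    (P : probability T R) (lam : R) (X : {RV P >-> R}) : Prop :=
  forall A : set R, measurable A -> distribution P X A = exponential_prob lam A.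

(* Protocol CORE(Delta): agent i_(k+1) (k : 'I_n) receives the trigger at time
   D k (the delay of the message sent by i_0 at time 0) and acts at time
   max(Delta, D k). *)
Definition core_action_time (R : realType) (n : nat) (Delta : R)
    (D : 'I_n -> R) (k : 'I_n) : R :=
  Num.max Delta (D k).

(* A run is correct iff t_1 <= t_2 <= ... <= t_n < oo.  Times are real
   numbers here, so finiteness is automatic. *)
Definition core_correct (R : realType) (n : nat) (Delta : R)
    (D : 'I_n -> R) : Prop :=
  forall i j : 'I_n, (i <= j)%N ->
    core_action_time Delta D i <= core_action_time Delta D j.

(* Main.v *)
Require Import Defs.
From HB Require Import structures.
From mathcomp Require Import all_boot all_order all_algebra.
From mathcomp Require Import all_classical all_reals all_analysis.
From mathcomp Require Import lra.
Import Order.TTheory GRing.Theory Num.Theory.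
Local Open Scope classical_set_scope.
Local Open Scope ring_scope.
Theorem corollary2 (d : measure_display) (T : measurableType d) (R : realType)
    (P : probability T R) (n : nat) (lam p Delta : R)
    (D : 'I_n -> {RV P >-> R}) :
  (0 < n)%N -> 0 < lam -> 0 < p < 1 ->
  mutually_independent D ->
  (forall k, exponentially_distributed lam (D k)) ->
  - ln (1 - p `^ (n%:R)^-1) / lam <= Delta ->
  (p%:E <= P [set w | core_correct Delta (fun k => D k w)])%E.
Proof.
move=> n0 lam0 /andP[p0 p1] Hind Hexp HD.
set q := p `^ (n%:R)^-1 in HD.
have q0 : 0 <= q by exact: powR_ge0.
have hq : q ^+ n = p.
  rewrite -powR_mulrn // -powRrM mulVf ?pnatr_eq0 -?lt0n // powRr1 //.
  exact: ltW.
have q1 : q < 1 by rewrite -(expr_lt1 n0 q0) hq.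
have q0' : 0 < q by exact: powR_gt0.
have lnq : ln (1 - q) < 0 by apply: ln_lt0; apply/andP; split; lra.
have Delta0 : 0 < Delta.
  apply: (lt_le_trans _ HD); apply: divr_gt0 => //; lra.
set e := expR (- lam * Delta).
have e1 : e <= 1 - q.
  rewrite /e -[leRHS]lnK; last by rewrite posrE; lra.
  rewrite ler_expR.
  move: HD; rewrite ler_pdivrMr // => HD; lra.
have e0 : 0 < e by exact: expR_gt0.
have hp : p <= (1 - e) ^+ n.
  rewrite -hq; apply: lerXn2r; rewrite ?nnegrE //; lra.
set A := \bigcap_(i in [set` [set: 'I_n]%SET]) (D i @^-1` `[0, Delta]).
have mpre : forall i, measurable (D i @^-1` `[0, Delta]).
  move=> i; rewrite -[X in measurable X]setTI.
  by apply: (measurable_funP (D i)) => //.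
have mA : measurable A.
  by apply: fin_bigcap_measurable => //; exact: finite_finset.
have PA : P A = ((1 - e) ^+ n)%:E.
  rewrite /A (Hind [set: 'I_n]%SET (fun _ => `[0, Delta]%classic)); last first.
    by move=> _; exact: measurable_itv.
  rewrite (eq_bigr (fun=> (1 - e)%:E)); last first.
    move=> i _; have := Hexp i _ (measurable_itv `[0, Delta]).
    rewrite /distribution /pushforward /= => ->.
    by rewrite exponential_prob_itv0c // EFinB.
  by rewrite prodEFin prodr_const cardsT card_ord.
have mC : measurable [set w | core_correct Delta (fun k => D k w)].
  have -> : [set w | core_correct Delta (fun k => D k w)] =
    \bigcap_(i in [set: 'I_n]) \bigcap_(j in [set j : 'I_n | (i <= j)%N])
      ((fun w => Num.max Delta (D i w) <= Num.max Delta (D j w)) @^-1` [set true]).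
    apply/seteqP; split => w /=.
      by move=> H i _ j /= ij; apply/eqP; rewrite eqb_id; exact: H.
    move=> H i j ij; have := H i I j ij; rewrite /= => ->; done.
  apply: fin_bigcap_measurable => [|i _]; first exact: finite_finset.
  apply: fin_bigcap_measurable => [|j _]; first exact: finite_finset.
  rewrite -[X in measurable X]setTI.
  apply: measurable_realfun.measurable_fun_ler => //.
    by apply: measurable_realfun.measurable_maxr => //; exact: measurable_cst.
  by apply: measurable_realfun.measurable_maxr => //; exact: measurable_cst.
apply: (@le_trans _ _ (P A)).
  by rewrite PA lee_fin.
apply: le_measure; rewrite ?inE //.
move=> w /= Hw i j ij.
rewrite /core_action_time.
have h : forall k, Num.max Delta (D k w) = Delta.
  move=> k; have := Hw k; rewrite /= inE in_itv /= => /(_ isT) /andP[_ hk].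
  by apply/max_idPl.
by rewrite !h.
Qed.
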